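(* Let $d\ge1$ and let $P$ be a probability distribution on $\{0,1\}^d$ with $P(\nu)>0$ for every $\nu\in\{0,1\}^d$. Define \[ \lambda(P):=\sup\{\lambda\ge0\mid \exists\, Q \text{ a probability distribution on }\{0,1\}^d\text{ with independent marginals such that } P(\nu)\ge\lambda Q(\nu)\ \forall \nu\in\{0,1\}^d\}. \] For $\omega\in\{0,1\}^d$ and $q\in[0,1]^d$ let $f_\omega(q):=\prod_{i=1}^d q_i^{-\omega_i}(1-q_i)^{\omega_i-1}\in\mathbb{R}\cup\{+\infty\}$ (with $0^0=1$, $1/0=+\infty$), and let \[ \mathcal{Q}_\omega:=\{q\in[0,1]^d \mid \forall \nu\in\{0,1\}^d:\ P(\omega)f_\omega(q)\le P(\nu)f_\nu(q)\}. \] Then \[ \lambda(P)=\max_{\omega\in\{0,1\}^d}\ \max_{q\in\mathcal{Q}_\omega} P(\omega)f_\omega(q). \]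
   Context: A probability distribution $Q$ on $\{0,1\}^d$ has independent marginals if $Q=\mu_1\otimes\cdots\otimes\mu_d$ for some probability distributions $\mu_1,\ldots,\mu_d$ on $\{0,1\}$, i.e. $Q$ is the law of a vector of independent (not necessarily identically distributed) Bernoulli random variables. *)

(* Defs.v *)
From HB Require Import structures.
From mathcomp Require Import all_boot all_order all_algebra.
From mathcomp Require Import all_classical all_reals.
From mathcomp Require Import ereal.
Set Implicit Arguments. Unset Strict Implicit. Unset Printing Implicit Defensive.
Import Order.TTheory GRing.Theory Num.Theory.
Local Open Scope ring_scope.

Definition cube (d : nat) := {ffun 'I_d -> bool}.

Definition is_prob {R : realType} {T : finType} (Q : T -> R) : Prop :=
  (forall x, 0 <= Q x) /\ \sum_(x : T) Q x = 1.

Definition indep_marginals {R : realType} (d : nat) (Q : cube d -> R) : Prop :=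
  exists mu : 'I_d -> bool -> R,
    (forall i, is_prob (mu i)) /\
    forall nu : cube d, Q nu = \prod_(i < d) mu i (nu i).

Definition lambdaP {R : realType} (d : nat) (P : cube d -> R) : R :=
  sup [set l : R | 0 <= l /\ exists Q : cube d -> R,
        is_prob Q /\ indep_marginals Q /\ forall nu, l * Q nu <= P nu].

Definition einv {R : realType} (x : R) : \bar R :=
  if x == 0 then +oo%E else (x^-1)%:E.

(* f_omega(q) = prod_i q_i^{-omega_i} (1-q_i)^{omega_i - 1}, with 0^0 = 1, 1/0 = +oo *)
Definition f_om {R : realType} (d : nat) (om : cube d) (q : 'I_d -> R) : \bar R :=
  (\prod_(i < d) (if om i then einv (q i) else einv (1 - q i)))%E.

Definition in_unit_cube {R : realType} (d : nat) (q : 'I_d -> R) : Prop :=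
  forall i, 0 <= q i <= 1.

Definition Qset {R : realType} (d : nat) (P : cube d -> R) (om : cube d)
    (q : 'I_d -> R) : Prop :=
  in_unit_cube q /\
  forall nu : cube d, ((P om)%:E * f_om om q <= (P nu)%:E * f_om nu q)%E.

(* Main.v *)
Require Import Defs.
From HB Require Import structures.
From mathcomp Require Import all_boot all_order all_algebra.
From mathcomp Require Import all_classical all_reals.
From mathcomp Require Import ereal.
From mathcomp Require Import topology normedtype derive.
Import Order.TTheory GRing.Theory Num.Theory.
Import numFieldNormedType.Exports.
Local Open Scope ring_scope.

Definition Qp {R : realType} {d : nat} (q : 'I_d -> R) (nu : cube d) : R :=
  \prod_(i < d) (if nu i then q i else 1 - q i).

Lemma einvM (R : realType) (a b : R) : 0 <= a -> 0 <= b ->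
  (einv a * einv b)%E = einv (a * b).
Proof.
move=> a0 b0; rewrite /einv.
case: (a =P 0%R) => [az|/eqP an0].
  subst a; rewrite mul0r eqxx.
  case: (b =P 0%R) => [bz|/eqP bn0]; first by [].
  by rewrite mulyr gtr0_sg ?mul1e // invr_gt0 lt0r bn0.
case: (b =P 0%R) => [bz|/eqP bn0].
  by subst b; rewrite mulr0 eqxx mulry gtr0_sg ?mul1e // invr_gt0 lt0r an0.
by rewrite mulf_eq0 (negbTE an0) (negbTE bn0) /= -EFinM invfM mulrC.
Qed.

Lemma prod_einv (R : realType) (I : Type) (s : seq I) (x : I -> R) :
  (forall i, 0 <= x i) ->
  (\prod_(i <- s) einv (x i))%E = einv (\prod_(i <- s) x i).
Proof.
move=> x0; elim: s => [|a s IH]; first by rewrite !big_nil /einv oner_eq0 invr1.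
rewrite !big_cons IH einvM //; exact: prodr_ge0.
Qed.

Lemma f_omE (R : realType) d (om : cube d) (q : 'I_d -> R) :
  in_unit_cube q -> f_om om q = einv (Qp q om).
Proof.
move=> hq; rewrite /f_om /Qp -prod_einv; last first.
  by move=> i; case: (om i); have /andP[] := hq i => *; rewrite ?subr_ge0.
by apply: eq_bigr => i _; case: (om i).
Qed.

Section S.
Local Set Implicit Arguments.
Local Open Scope ring_scope.

Lemma Qp_ge0 {R : realType} {d} (q : 'I_d -> R) nu : in_unit_cube q -> 0 <= Qp q nu.
Proof.
move=> hq; apply: prodr_ge0 => i _.
by case: (nu i); have /andP[] := hq i => *; rewrite ?subr_ge0.
Qed.

Lemma Qp_sum {R : realType} {d} (q : 'I_d -> R) : \sum_nu Qp q nu = 1.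
Proof.
rewrite /Qp -(bigA_distr_bigA (fun i b => if b then q i else 1 - q i)) /=.
by apply: big1 => i _; rewrite big_bool /= addrC subrK.
Qed.

Definition Fq {R : realType} {d} (P : cube d -> R) (q : 'I_d -> R) nu := Qp q nu / P nu.
Definition mq {R : realType} {d} (P : cube d -> R) (q : 'I_d -> R) :=
  \big[Order.max/0%R]_(nu : cube d) Fq P q nu.

Lemma mq_ge {R : realType} {d} (P : cube d -> R) q nu : Fq P q nu <= mq P q.
Proof. exact: le_bigmax. Qed.

Lemma Qp_le {R : realType} {d} (P : cube d -> R) q nu : (forall nu, 0 < P nu) ->
  Qp q nu <= mq P q * P nu.
Proof. by move=> hpos; rewrite -ler_pdivrMr //; apply: mq_ge. Qed.

Lemma mq_ge1 {R : realType} {d} (P : cube d -> R) q : is_prob P -> (forall nu, 0 < P nu) ->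
  1 <= mq P q.
Proof.
move=> [_ hs] hpos; rewrite -{1}(Qp_sum q).
apply: (@le_trans _ _ (\sum_nu mq P q * P nu)).
  by apply: ler_sum => nu _; apply: Qp_le.
by rewrite -mulr_sumr hs mulr1.
Qed.

Lemma mq_arg {R : realType} {d} (P : cube d -> R) q : in_unit_cube q -> (forall nu, 0 < P nu) ->
  exists nu0, mq P q = Fq P q nu0.
Proof.
move=> hq hpos.
have [nu0 _ E] := @eq_bigmax _ R _ 0%R [ffun => true] predT (Fq P q) isT
  (fun i _ => divr_ge0 (Qp_ge0 i hq) (ltW (hpos i))).
by exists nu0; rewrite -E.
Qed.

Lemma VE {R : realType} {d} (P : cube d -> R) q nu : in_unit_cube q -> (forall nu, 0 < P nu) ->
  ((P nu)%:E * f_om nu q)%E = if Qp q nu == 0 then +oo%E else (P nu / Qp q nu)%:E.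
Proof.
move=> hq hpos; rewrite f_omE // /einv; case: ifP => _.
  by rewrite mulry gtr0_sg ?mul1e.
by rewrite -EFinM.
Qed.

Lemma V_ge {R : realType} {d} (P : cube d -> R) q nu : is_prob P -> in_unit_cube q -> (forall nu, 0 < P nu) ->
  ((mq P q)^-1%:E <= (P nu)%:E * f_om nu q)%E.
Proof.
move=> hP hq hpos; rewrite VE //; case: eqP => [_|/eqP Qn0]; first exact: leey.
have Qp0 : 0 < Qp q nu by rewrite lt0r Qn0 Qp_ge0.
have m0 : 0 < mq P q by apply: lt_le_trans (mq_ge1 q hP hpos).
rewrite lee_fin ler_pdivlMr // mulrC ler_pdivrMr //.
by rewrite mulrC; apply: Qp_le.
Qed.

Lemma V_arg {R : realType} {d} (P : cube d -> R) q nu : is_prob P -> in_unit_cube q -> (forall nu, 0 < P nu) ->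
  mq P q = Fq P q nu -> ((P nu)%:E * f_om nu q)%E = ((mq P q)^-1)%:E.
Proof.
move=> hP hq hpos E.
have m0 : 0 < mq P q by apply: lt_le_trans (mq_ge1 q hP hpos).
have EQ : Qp q nu = mq P q * P nu by rewrite E /Fq mulrVK // unitfE gt_eqF.
rewrite VE // EQ mulf_eq0 (gt_eqF m0) (gt_eqF (hpos nu)) /=.
by congr (_%:E); rewrite invfM mulrCA mulfV ?mulr1 // gt_eqF.
Qed.

End S.

Lemma cont_bigmax (R : realType) (T : topologicalType) (I : Type) (s : seq I)
  (G : I -> T -> R) : (forall i, continuous (G i)) ->
  continuous (fun y => \big[Order.max/0%R]_(i <- s) G i y).
Proof.
move=> cG; elim: s => [|a s IH].
  rewrite (_ : (fun _ => _) = fun=> 0%R); last by apply/funext => y; rewrite big_nil.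
  by move=> x; apply: cvg_cst.
rewrite (_ : (fun _ => _) = (G a) \max (fun y => \big[Order.max/0%R]_(i <- s) G i y)); last first.
  by apply/funext => y; rewrite big_cons.
by move=> x; apply: continuous_max; [apply: cG | apply: IH].
Qed.

Lemma cont_bigprod (R : realType) (T : topologicalType) (I : Type) (s : seq I)
  (G : I -> T -> R) : (forall i, continuous (G i)) ->
  continuous (fun y => \prod_(i <- s) G i y).
Proof.
move=> cG; elim: s => [|a s IH].
  rewrite (_ : (fun _ => _) = fun=> 1%R); last by apply/funext => y; rewrite big_nil.
  by move=> x; apply: cvg_cst.
rewrite (_ : (fun _ => _) = (G a) \* (fun y => \prod_(i <- s) G i y)); last first.
  by apply/funext => y; rewrite big_cons.
by move=> x; apply: continuousM; [apply: cG | apply: IH].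
Qed.

Lemma cont_mq (R : realType) d (P : cube d -> R) :
  continuous (fun v : 'rV[R]_d => mq P (fun i => v ord0 i)).
Proof.
apply: cont_bigmax => nu.
rewrite /Fq /Qp.
move=> x.
apply: (@continuousM _ _ (fun v : 'rV[R]_d => \prod_(i < d) (if nu i then v ord0 i else 1 - v ord0 i)) (fun=> (P nu)^-1)); last exact: cst_continuous.
move: x; apply: (@cont_bigprod _ _ _ _ (fun i (v : 'rV[R]_d) => if nu i then v ord0 i else 1 - v ord0 i)).
move=> i; case: (nu i).
  exact: coord_continuous.
move=> y; apply: continuousB; first exact: cst_continuous.
exact: coord_continuous.
Qed.

Lemma ubound_lambda (R : realType) d (P : cube d -> R) (hP : is_prob P)
  (hpos : forall nu, 0 < P nu)
  (l : R) (Q : cube d -> R) : is_prob Q -> indep_marginals Q ->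
  (forall nu, l * Q nu <= P nu) -> exists q, in_unit_cube q /\ l <= (mq P q)^-1.
Proof.
move=> hQ [mu [hmu EQ]] hl.
pose q i := mu i true.
have hmuf i : mu i false = 1 - q i.
  have [_ s1] := hmu i; rewrite big_bool /= in s1.
  by rewrite -s1 /q addrC addrK.
have hq : in_unit_cube q.
  move=> i; have [g0 _] := hmu i; apply/andP; split; first exact: g0.
  rewrite -subr_ge0 -hmuf; exact: g0.
have EQ' nu : Q nu = Qp q nu.
  by rewrite EQ /Qp; apply: eq_bigr => i _; case: (nu i); rewrite ?hmuf.
have [nu0 E0] := mq_arg P hq hpos.
have m0 : 0 < mq P q by apply: lt_le_trans (mq_ge1 q hP hpos).
exists q; split => //.
have EQp : Qp q nu0 = mq P q * P nu0 by rewrite E0 /Fq mulrVK // unitfE gt_eqF.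
have := hl nu0; rewrite EQ' EQp mulrA -{2}(mul1r (P nu0)) ler_pM2r // => h.
by rewrite -[_^-1]mul1r ler_pdivlMr.
Qed.

Theorem lemma2 (R : realType) (d : nat) (hd : (1 <= d)%N) (P : cube d -> R)
    (hP : is_prob P) (hpos : forall nu, 0 < P nu) :
  exists (om : cube d) (q : 'I_d -> R),
    Qset P om q /\
    (lambdaP P)%:E = ((P om)%:E * f_om om q)%E /\
    (forall (om' : cube d) (q' : 'I_d -> R), Qset P om' q' ->
       ((P om')%:E * f_om om' q' <= (P om)%:E * f_om om q)%E).
Proof.
pose K := [set v : 'rV[R]_d | forall i, `[0%R, 1%R]%classic (v ord0 i)]%classic.
have cK : compact K by exact: (@rV_compact R d (fun=> `[0%R, 1%R]%classic) (fun=> @segment_compact R 0 1)).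
have K0 : (K !=set0)%classic.
  by exists 0 => i /=; rewrite mxE in_itv /= lexx ler01.
have cf : {within K, continuous (fun v : 'rV[R]_d => mq P (fun i => v ord0 i))}%classic.
  by apply: continuous_subspaceT; exact: cont_mq.
have [c cK' cmin] := EVT_min_rV K0 cK cf.
pose qs := fun i => c ord0 i.
have hqs : in_unit_cube qs.
  by rewrite inE in cK'; move=> i; have := cK' i; rewrite /= in_itv.
have hmin q : in_unit_cube q -> mq P qs <= mq P q.
  move=> hq.
  have := cmin (\row_i q i).
  rewrite (_ : (fun i => (\row_j q j) ord0 i) = q); last first.
    by apply/funext => i; rewrite mxE.
  apply; rewrite inE => i /=; rewrite mxE in_itv /=; exact: hq.
have ms0 : 0 < mq P qs by apply: lt_le_trans (mq_ge1 qs hP hpos).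
have [om Eom] := mq_arg P hqs hpos.
have Vom := V_arg om hP hqs hpos Eom.
exists om, qs; rewrite Vom; split.
  by split => // nu; rewrite Vom; exact: V_ge.
split; last first.
  move=> om' q' [hq' H'].
  have [nu0 E0] := mq_arg P hq' hpos.
  have V0 := V_arg nu0 hP hq' hpos E0.
  apply: le_trans (H' nu0) _; rewrite V0 lee_fin.
  have m0 : 0 < mq P q' by apply: lt_le_trans (mq_ge1 q' hP hpos).
  by rewrite lef_pV2 ?posrE // hmin.
have hin : [set l : R | 0 <= l /\ exists Q : cube d -> R,
        is_prob Q /\ indep_marginals Q /\ forall nu, l * Q nu <= P nu]%classic (mq P qs)^-1.
  split; first by rewrite invr_ge0 ltW.
  exists (Qp qs); split; first by split; [move=> nu; exact: Qp_ge0 | exact: Qp_sum].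
  split.
    exists (fun i (b : bool) => if b then qs i else 1 - qs i); split.
      move=> i; split; first by case; have /andP[] := hqs i => *; rewrite ?subr_ge0.
      by rewrite big_bool /= addrC subrK.
    by move=> nu; rewrite /Qp.
  move=> nu; rewrite mulrC ler_pdivrMr // mulrC; exact: Qp_le.
have hub : ubound [set l : R | 0 <= l /\ exists Q : cube d -> R,
        is_prob Q /\ indep_marginals Q /\ forall nu, l * Q nu <= P nu]%classic (mq P qs)^-1.
  move=> l [_ [Q [hQ [hind hl]]]].
  have [q [hq lq]] := @ubound_lambda R d P hP hpos l Q hQ hind hl.
  apply: le_trans lq _.
  have m0 : 0 < mq P q by apply: lt_le_trans (mq_ge1 q hP hpos).
  by rewrite lef_pV2 ?posrE // hmin.
congr (_%:E); rewrite /lambdaP; apply: le_anti; apply/andP; split.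
  by apply: ge_sup => //; exists (mq P qs)^-1.
by apply: ub_le_sup => //; exists (mq P qs)^-1.
Qed.
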